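(* Let $S$ and $Z$ be finite nonempty alphabets with $\#Z\le\#S$, let $\tau:S\to Z$ be surjective, and let $(\Sigma,\sigma_\tau)$ be the associated full zip shift space. Then $\sigma_\tau$ is an expansive local homeomorphism.
   Context: The zip shift space is $\Sigma=\Sigma_{Z,S}$, the set of bi-infinite sequences $x=(x_i)_{i\in\mathbb{Z}}$ with $x_i\in S$ for $i\ge 0$ and $x_i\in Z$ for $i<0$, with metric $d(x,y)=2^{-M(x,y)}$, $M(x,y)=\min\{|i|: x_i\ne y_i\}$. The zip shift map $\sigma_\tau:\Sigma\to\Sigma$ is given by $(\sigma_\tau x)_i=x_{i+1}$ for $i\ne -1$ and $(\sigma_\tau x)_{-1}=\tau(x_0)$. A continuous map (local homeomorphism) $f:X\to X$ of a compact metric space $(X,d)$ is called expansive with expansivity constant $e>0$ if for any $x\neq y$ in $X$ there exists $n\in\mathbb{Z}$ such that $d(f^n(x),f^n(y))>e$, where for $n<0$, $f^n(x)$ and $f^n(y)$ denote the sets of $|n|$-th preimages and $d$ is taken as the minimum distance between these sets. *)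

(* Defs.v *)
From HB Require Import structures.
From mathcomp Require Import all_boot all_order all_algebra.
From mathcomp Require Import boolp classical_sets reals Rstruct.
Set Implicit Arguments. Unset Strict Implicit. Unset Printing Implicit Defensive.
Import Order.TTheory GRing.Theory Num.Theory.
Local Open Scope ring_scope.
Local Open Scope classical_set_scope.

Notation Real := Rdefinitions.R.

Section Generic.
Variable T : Type.
Variable d : T -> T -> Real.

Definition dball (x : T) (r : Real) : set T := [set y | d x y < r].

Definition dopen (U : set T) : Prop :=
  forall x, U x -> exists2 r : Real, 0 < r & dball x r `<=` U.

Definition dcontinuous_on (g : T -> T) (A : set T) : Prop :=
  forall x, A x -> forall eps : Real, 0 < eps ->
    exists2 del : Real, 0 < del &
      forall y, A y -> d x y < del -> d (g x) (g y) < eps.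

Definition local_homeomorphism (f : T -> T) : Prop :=
  forall x, exists U : set T,
    [/\ dopen U, U x, dopen (f @` U),
        (forall u v, U u -> U v -> f u = f v -> u = v) /\ dcontinuous_on f U &
        exists g : T -> T,
          [/\ forall u, U u -> g (f u) = u,
              forall y, (f @` U) y -> U (g y) /\ f (g y) = y &
              dcontinuous_on g (f @` U)]].

Definition preimages (f : T -> T) (k : nat) (x : T) : set T :=
  [set z | iter k f z = x].

Definition setdist (A B : set T) : Real :=
  inf [set r | exists a b, [/\ A a, B b & r = d a b]].

(* "d(f^n x, f^n y)" for n in Z; for n < 0 the sets of |n|-th preimages *)
Definition iter_dist (f : T -> T) (n : int) (x y : T) : Real :=
  match n with
  | Posz k => d (iter k f x) (iter k f y)
  | Negz k => setdist (preimages f k.+1 x) (preimages f k.+1 y)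
  end.

Definition expansive (f : T -> T) : Prop :=
  exists2 e : Real, 0 < e &
    forall x y, x <> y -> exists n : int, iter_dist f n x y > e.
End Generic.

(* A point x = (x_i)_{i in Z} is stored as zpos i = x_i (i >= 0, in S) and
   zneg j = x_{-(j+1)} (in Z). *)
Record zipseq (S Z : Type) := Zip { zpos : nat -> S; zneg : nat -> Z }.

Section Zip.
Variables S Z : finType.

Definition zcoord (x : zipseq S Z) (i : int) : S + Z :=
  match i with
  | Posz k => inl (zpos x k)
  | Negz k => inr (zneg x k)
  end.

Definition zdiffer (x y : zipseq S Z) (m : nat) : bool :=
  (zcoord x (Posz m) != zcoord y (Posz m)) || (zcoord x (- Posz m) != zcoord y (- Posz m)).

(* d(x,y) = 2^(-M(x,y)),  M(x,y) = min {|i| : x_i <> y_i};  d(x,x) = 0 *)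
Definition zdist (x y : zipseq S Z) : Real :=
  match pselect (exists m, zdiffer x y m) with
  | left h => (2 : Real) ^- (ex_minn h)
  | right _ => 0
  end.

Definition zshift (tau : S -> Z) (x : zipseq S Z) : zipseq S Z :=
  Zip (fun i => zpos x i.+1)
      (fun j => match j with 0 => tau (zpos x 0) | j'.+1 => zneg x j' end).
End Zip.

(* Main.v *)
Require Import Defs.
From HB Require Import structures.
From mathcomp Require Import all_boot all_order all_algebra.
From mathcomp Require Import boolp classical_sets reals Rstruct.
Import Order.TTheory GRing.Theory Num.Theory.
Set Implicit Arguments. Unset Strict Implicit. Unset Printing Implicit Defensive.

Local Open Scope ring_scope.
Local Open Scope classical_set_scope.

Lemma two_gt1 : 1 < (2 : Rdefinitions.R). Proof. by rewrite ltr1n. Qed.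

Lemma pow2_pos (n : nat) : 0 < (2 : Rdefinitions.R) ^+ n.
Proof. by rewrite exprn_gt0 // ltr0n. Qed.

Lemma pow2_le (m n : nat) : (m <= n)%N -> (2 : Rdefinitions.R) ^- n <= 2 ^- m.
Proof.
move=> H; rewrite lef_pV2 ?posrE ?pow2_pos //.
by rewrite ler_eXn2l // two_gt1.
Qed.

Lemma pow2_lt (m n : nat) : (m < n)%N -> (2 : Rdefinitions.R) ^- n < 2 ^- m.
Proof.
move=> H; rewrite ltf_pV2 ?posrE ?pow2_pos //.
by rewrite ltr_eXn2l // two_gt1.
Qed.

Lemma pow2_small (eps : Rdefinitions.R) : 0 < eps -> exists n : nat, (2 : Rdefinitions.R) ^- n < eps.
Proof.
move=> he.
have h0 : 0 <= eps^-1 by rewrite invr_ge0 ltW.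
have := archi_boundP h0.
set n := Num.Def.archi_bound _ => Hn.
exists n.
have Hn2 : eps^-1 < (2 : Rdefinitions.R) ^+ n.
  apply: (lt_trans Hn).
  have := ltn_expl n (isT : (1 < 2)%N).
  by rewrite -(ltr_nat Rdefinitions.R) natrX.
rewrite -(invrK eps) ltf_pV2 ?posrE ?pow2_pos ?invr_gt0 //.
Qed.

Section Z.
Variables S Z : finType.
Implicit Types x y : zipseq S Z.

Definition agree (n : nat) x y := forall m, (m <= n)%N -> ~~ zdiffer x y m.

Lemma zipseq_ext x y : zpos x =1 zpos y -> zneg x =1 zneg y -> x = y.
Proof.
case: x => p1 n1; case: y => p2 n2 /= H1 H2.
by rewrite (funext H1) (funext H2).
Qed.

Lemma agreeP n x y : agree n x y <->
  (forall i, (i <= n)%N -> zpos x i = zpos y i) /\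
  (forall j, (j < n)%N -> zneg x j = zneg y j).
Proof.
split.
- move=> H; split.
  + move=> i Hi; have := H i Hi; rewrite /zdiffer /= negb_or.
    by case/andP => /negPn/eqP [].
  + move=> j Hj; have := H j.+1 Hj; rewrite /zdiffer /=.
    by rewrite negb_or => /andP [_ /negPn/eqP []].
- move=> [H1 H2] m Hm; rewrite /zdiffer negb_or; apply/andP; split.
  + by rewrite /= (H1 m Hm) eqxx.
  + case: m Hm => [|m] Hm /=; first by rewrite (H1 0%N Hm) eqxx.
    by rewrite (H2 m Hm) eqxx.
Qed.

Lemma zdist_lt n x y : agree n x y -> zdist x y < 2 ^- n.
Proof.
move=> H; rewrite /zdist; case: pselect => [h|_]; last by rewrite invr_gt0 pow2_pos.
case: ex_minnP => m Hm _.
apply: pow2_lt; rewrite ltnNge; apply/negP => Hle.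
by move: (H m Hle); rewrite Hm.
Qed.

Lemma zdist_agree n x y : zdist x y < 2 ^- n -> agree n x y.
Proof.
move=> H m Hm; apply/negP => Hd; move: H; rewrite /zdist.
case: pselect => [h|nh]; last by exfalso; apply: nh; exists m.
case: ex_minnP => k Hk Hmin.
have Hkn : (k <= n)%N := leq_trans (Hmin m Hd) Hm.
by rewrite ltNge pow2_le.
Qed.

Lemma zdist_one x y : zpos x 0 <> zpos y 0 -> zdist x y = 1.
Proof.
move=> H; rewrite /zdist.
have Hd : zdiffer x y 0 by rewrite /zdiffer /=; apply/orP; left; apply/eqP => -[].
case: pselect => [h|nh]; last by exfalso; apply: nh; exists 0%N.
case: ex_minnP => k Hk Hmin.
have := Hmin 0%N Hd; rewrite leqn0 => /eqP ->.
by rewrite expr0 invr1.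
Qed.

Lemma cont_of (h : zipseq S Z -> zipseq S Z) (A : set (zipseq S Z)) :
  (forall n x y, A x -> A y -> agree n.+1 x y -> agree n (h x) (h y)) ->
  dcontinuous_on (@zdist S Z) h A.
Proof.
move=> Hh x Ax eps he.
have [n Hn] := @pow2_small eps he.
exists (2 ^- n.+1); first by rewrite invr_gt0 pow2_pos.
move=> y Ay Hxy.
apply: lt_trans Hn; apply: zdist_lt; apply: Hh => //.
exact: zdist_agree.
Qed.

Variable tau : S -> Z.

Definition ginv (s : S) (z : zipseq S Z) : zipseq S Z :=
  Zip (fun i => match i with 0 => s | i'.+1 => zpos z i' end)
      (fun j => zneg z j.+1).

Lemma shift_ginv s w : zneg w 0 = tau s -> zshift tau (ginv s w) = w.
Proof.
move=> H; apply: zipseq_ext => //= -[|j] //.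
Qed.

Lemma ginv_shift u : ginv (zpos u 0) (zshift tau u) = u.
Proof. by apply: zipseq_ext => //= -[|j]. Qed.

Lemma shift_agree n x y : agree n.+1 x y -> agree n (zshift tau x) (zshift tau y).
Proof.
move/agreeP => [H1 H2]; apply/agreeP; split => /=.
- by move=> i Hi; apply: H1.
- case=> [|j] Hj /=; first by rewrite H1.
  by apply: H2; exact: (ltnW (ltnW Hj)).
Qed.

Lemma ginv_agree s n x y : agree n.+1 x y -> agree n (ginv s x) (ginv s y).
Proof.
move/agreeP => [H1 H2]; apply/agreeP; split => /=.
- case=> [|i] Hi //=; apply: H1; exact: leqW (ltnW Hi).
- by move=> j Hj; apply: H2.
Qed.

Lemma zpos_iter k x i : zpos (iter k (zshift tau) x) i = zpos x (i + k).
Proof.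
elim: k i => [|k IH] i /=; first by rewrite addn0.
by rewrite IH addnS.
Qed.

Lemma zneg_iter k a : zneg (iter k.+1 (zshift tau) a) k = tau (zpos a 0).
Proof.
elim: k => [|k IH] //=.
Qed.

Hypothesis tau_surj : forall z : Z, exists s : S, tau s = z.

Lemma iter_preimage k x : exists a, iter k (zshift tau) a = x.
Proof.
elim: k x => [|k IH] x; first by exists x.
have [s Hs] := tau_surj (zneg x 0).
have [a Ha] := IH (ginv s x).
exists a => /=; rewrite Ha; exact: shift_ginv.
Qed.

End Z.

Theorem proposition1 (S Z : finType) (tau : S -> Z) :
  (0 < #|S|)%N -> (0 < #|Z|)%N -> (#|Z| <= #|S|)%N ->
  (forall z : Z, exists s : S, tau s = z) ->
  local_homeomorphism (@zdist S Z) (zshift tau) /\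
  expansive (@zdist S Z) (zshift tau).
Proof.
move=> _ _ _ Hsurj; split.
- move=> x.
  pose U := [set u : zipseq S Z | zpos u 0 = zpos x 0].
  have gf : forall u, U u -> ginv (zpos x 0) (zshift tau u) = u.
    by move=> u Uu; rewrite -Uu ginv_shift.
  have imU : forall w, (zshift tau @` U) w <-> zneg w 0 = tau (zpos x 0).
    move=> w; split.
    + by case=> u Uu <- /=; rewrite Uu.
    + move=> Hw; exists (ginv (zpos x 0) w) => //.
      exact: shift_ginv.
  exists U; split.
  + move=> u Uu; exists 1; first by [].
    move=> v Hv; rewrite /U /=.
    have := @zdist_agree S Z 0 u v; rewrite expr0 invr1 => /(_ Hv) /agreeP [H1 _].
    by rewrite -H1.
  + by [].
  + move=> w /imU Hw; exists (2 ^- 1); first by rewrite invr_gt0 pow2_pos.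
    move=> v Hv; apply/imU.
    have /agreeP [_ H2] := zdist_agree Hv.
    by rewrite -H2.
  + split.
    * move=> u v Uu Uv E; by rewrite -(gf u Uu) -(gf v Uv) E.
    * by apply: cont_of => n a b _ _; apply: shift_agree.
  + exists (ginv (zpos x 0)); split.
    * exact: gf.
    * move=> y /imU Hy; split; first by [].
      exact: shift_ginv.
    * by apply: cont_of => n a b _ _; apply: ginv_agree.
- exists (2 ^- 1); first by rewrite invr_gt0 pow2_pos.
  have half_lt1 : (2 : Rdefinitions.R) ^- 1 < 1 by rewrite -[X in _ < X]invr1 -(expr0 (2:Rdefinitions.R)) pow2_lt.
  move=> x y Hxy.
  have [[i Hi]|[j Hj]] : (exists i, zpos x i <> zpos y i) \/ (exists j, zneg x j <> zneg y j).
    apply: contrapT => Hn; apply: Hxy; apply: zipseq_ext.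
    + move=> i; apply: contrapT => Hi; apply: Hn; left; by exists i.
    + move=> j; apply: contrapT => Hj; apply: Hn; right; by exists j.
  + exists (Posz i); rewrite /iter_dist zdist_one //.
    by rewrite !zpos_iter.
  + exists (Negz j); rewrite /iter_dist /setdist.
    set E := [set r | _].
    have -> : E = [set 1].
      apply/seteqP; split => r.
      * case=> a [b [Ha Hb ->]]; rewrite /= zdist_one //.
        move=> Eab; apply: Hj.
        by rewrite -Ha -Hb !zneg_iter Eab.
      * move=> -> /=.
        have [a Ha] := iter_preimage Hsurj j.+1 x.
        have [b Hb] := iter_preimage Hsurj j.+1 y.
        exists a, b; split => //; rewrite zdist_one // => Eab; apply: Hj.
        by rewrite -Ha -Hb !zneg_iter Eab.
    by rewrite inf1.
Qed.
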